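(* Let $s(x)=\sum_{n\ge0}s_nx^n\in\mathbb{R}[[x]]$ with $s_0=1$, and let $t(x)=1/s(x)=\sum_{n\ge0}t_nx^n$. Set $s_n=t_n=0$ for $n<0$. Then for all $M,N\in\mathbb{N}$, $$\det(s_{i+j-M})_{i,j=0}^{N+M}=(-1)^{N+\binom{M+1}{2}}\det(t_{i+j+M+2})_{i,j=0}^{N-1},$$ where the determinant of a $0\times 0$ matrix is $1$.
   Context: $\mathbb{N}=\{0,1,2,\dots\}$. *)

(* Defs.v *)
From HB Require Import structures.
From mathcomp Require Import all_boot all_order all_algebra.
Set Implicit Arguments. Unset Strict Implicit. Unset Printing Implicit Defensive.
Import Order.TTheory GRing.Theory Num.Theory.
Local Open Scope ring_scope.

(* A formal power series over R is represented by its coefficient sequence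
   a : nat -> R (a n = coefficient of x^n). *)

Definition inverse_series (R : ringType) (s t : nat -> R) : Prop :=
  forall n : nat, \sum_(k < n.+1) s k * t (n - k)%N = (n == 0%N)%:R.

Definition coef_shift (R : ringType) (s : nat -> R) (n M : nat) : R :=
  if (n < M)%N then 0 else s (n - M)%N.

(* Main.v *)
Require Import Defs.
From HB Require Import structures.
From mathcomp Require Import all_boot all_order all_algebra zify.
Import Order.TTheory GRing.Theory Num.Theory.
Local Open Scope ring_scope.

Lemma sumL1 (R : nzRingType) (s t : nat -> R) (M i j n : nat) : (j < n)%N ->
  \sum_(k < n) coef_shift s (i + k) M * (if (k <= j)%N then t (j - k)%N else 0)
  = \sum_(k < j.+1) coef_shift s (i + k) M * t (j - k)%N.
Proof.
move=> jn; rewrite (big_ord_widen n (fun k => coef_shift s (i + k) M * t (j - k)%N) jn).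
rewrite [RHS]big_mkcond /=; apply: eq_bigr => k _; rewrite ltnS.
by case: ifP => _; rewrite ?mulr0.
Qed.

Lemma sumL2 (R : nzRingType) (s t : nat -> R) (M i j : nat) :
  inverse_series s t -> (i <= M)%N ->
  \sum_(k < j.+1) coef_shift s (i + k) M * t (j - k)%N = ((i + j)%N == M)%:R.
Proof.
move=> inv iM.
rewrite -(big_mkord xpredT (fun k => coef_shift s (i + k) M * t (j - k)%N)).
case: (ltnP j (M - i)) => hj.
  rewrite big1_seq; last first.
    move=> k /andP[_]; rewrite mem_iota => /andP[_ hk].
    by rewrite /coef_shift ifT ?mul0r //; lia.
  by rewrite (_ : (i + j == M) = false) //; apply/eqP; lia.
rewrite (@big_cat_nat _ _ _ (M - i)%N 0%N j.+1) /=; last 2 first. by []. by lia.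
rewrite big1_seq; last first.
  move=> k /andP[_]; rewrite mem_iota => /andP[_ hk].
  by rewrite /coef_shift ifT ?mul0r //; lia.
rewrite add0r -{1}(add0n (M - i)%N) big_addn.
rewrite (_ : (j.+1 - (M - i)) = (j - (M - i)).+1)%N; last by lia.
rewrite (_ : (i + j == M) = (j - (M - i) == 0)%N); last by apply/idP/idP => /eqP h; apply/eqP; lia.
rewrite big_mkord -(inv (j - (M - i))%N).
apply: eq_bigr => k _; rewrite /coef_shift ifF; last by lia.
by congr (s _ * t _); lia.
Qed.

Lemma sumL3 (R : nzRingType) (s t : nat -> R) (M a b : nat) :
  inverse_series s t ->
  \sum_(k < (M.+1 + b).+1) coef_shift s (M.+1 + a + k) M * t (M.+1 + b - k)%N
  = - \sum_(c < a.+1) s (a - c)%N * t (c + b + M + 2)%N.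
Proof.
move=> inv.
have h := inv (a.+1 + (M.+1 + b))%N.
rewrite (_ : (a.+1 + (M.+1 + b) == 0)%N = false) // in h.
rewrite (_ : (a.+1 + (M.+1 + b)).+1 = a.+1 + (M.+1 + b).+1)%N in h; last by lia.
rewrite big_split_ord /= in h.
apply/eqP; rewrite -addr_eq0 addrC; apply/eqP; rewrite -[RHS]h; congr (_ + _).
  rewrite (reindex_inj rev_ord_inj) /=; apply: eq_bigr => c _.
  by have := ltn_ord c => hc; congr (s _ * t _); lia.
apply: eq_bigr => k _; rewrite /coef_shift ifF; last by lia.
by congr (s _ * t _); lia.
Qed.


Lemma det_antidiag (R : comNzRingType) (m : nat) :
  \det (\matrix_(i < m, j < m) ((i + j)%N == m.-1)%:R : 'M[R]_m) = (-1) ^+ 'C(m, 2).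
Proof.
elim: m => [|m IH]; first by rewrite det_mx00.
rewrite (expand_det_col _ ord_max) big_ord_recl big1 ?addr0; last first.
  move=> i _; rewrite !mxE /=.
  rewrite (_ : (bump 0 i + m == m) = false) ?mul0r //.
  by apply/eqP; rewrite /bump; lia.
rewrite !mxE /= add0n eqxx mul1r /cofactor /= add0n.
rewrite (_ : row' 0 (col' ord_max _) = \matrix_(i<m,j<m) ((i+j)%N == m.-1)%:R); last first.
  apply/matrixP => i j; rewrite !mxE /=; congr (_%:R).
  have hi := ltn_ord i; have hj := ltn_ord j.
  by rewrite /bump; apply/eqP/eqP; lia.
by rewrite IH -exprD binS bin1 addnC.
Qed.

Lemma main_sq (R : comNzRingType) (s t : nat -> R) (M N : nat) :
  s 0%N = 1 -> inverse_series s t ->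
  \det (\matrix_(i < M.+1 + N, j < M.+1 + N) coef_shift s (i + j) M)
  = (-1) ^+ (N + 'C(M.+1, 2)) * \det (\matrix_(i < N, j < N) t (i + j + M + 2)%N).
Proof.
move=> s0 inv.
have t0 : t 0%N = 1 by have := inv 0%N; rewrite big_ord1 s0 mul1r.
set H := \matrix_(i < _, j < _) _.
pose U := \matrix_(i < M.+1 + N, j < M.+1 + N) (if (i <= j)%N then t (j - i)%N else 0).
have dU : \det U = 1.
  rewrite -det_tr det_trig; last first.
    by apply/is_trig_mxP => i j hij; rewrite !mxE leqNgt hij.
  by apply: big1 => i _; rewrite !mxE leqnn subnn t0.
have HU : forall i j : 'I_(M.+1 + N),
    (H *m U) i j = \sum_(k < j.+1) coef_shift s (i + k) M * t (j - k)%N.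
  move=> i j; rewrite mxE -(@sumL1 _ s t M i j _ (ltn_ord j)).
  by apply: eq_bigr => k _; rewrite !mxE.
have -> : \det H = \det (H *m U) by rewrite det_mulmx dU mulr1.
rewrite -[H *m U]submxK.
have -> : ursubmx (H *m U) = 0.
  apply/matrixP => i j; rewrite [LHS]mxE [LHS]mxE HU [RHS]mxE sumL2 //=; last by rewrite -ltnS.
  by rewrite (_ : (i + (M.+1 + j) == M)%N = false) //; apply/eqP; lia.
rewrite det_lblock.
have -> : ulsubmx (H *m U) = \matrix_(i < M.+1, j < M.+1) ((i + j)%N == M.+1.-1)%:R.
  by apply/matrixP => i j; rewrite [LHS]mxE [LHS]mxE HU [RHS]mxE sumL2 //= -ltnS.
rewrite det_antidiag.
pose P := \matrix_(a < N, c < N) (if (c <= a)%N then s (a - c)%N else 0).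
pose G := \matrix_(i < N, j < N) t (i + j + M + 2)%N.
have -> : drsubmx (H *m U) = (-1) *: (P *m G).
  apply/matrixP => a b; rewrite [LHS]mxE [LHS]mxE HU /= (sumL3 _ s t M a b inv); rewrite [RHS]mxE mulN1r mxE; congr (- _).
  rewrite (big_ord_widen N (fun c => s (a - c)%N * t (c + b + M + 2)%N) (ltn_ord a)).
  rewrite [LHS]big_mkcond; apply: eq_bigr => c _; rewrite !mxE ltnS.
  by case: ifP => _; rewrite ?mul0r.
have dP : \det P = 1.
  rewrite det_trig; last first.
    by apply/is_trig_mxP => i j hij; rewrite !mxE leqNgt hij.
  by apply: big1 => i _; rewrite !mxE leqnn subnn s0.
rewrite detZ det_mulmx dP mul1r exprD.
by rewrite mulrA [(-1) ^+ 'C(_, _) * _]mulrC.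
Qed.

Lemma det_size_eq (R : comNzRingType) (F : nat -> nat -> R) (k1 k2 : nat) :
  k1 = k2 -> \det (\matrix_(i < k1, j < k1) F i j) = \det (\matrix_(i < k2, j < k2) F i j).
Proof. by move=> ->. Qed.

Theorem lemma2p1 (R : realFieldType) (s t : nat -> R) (M N : nat) :
  s 0%N = 1 ->
  inverse_series s t ->
  \det (\matrix_(i < (N + M).+1, j < (N + M).+1) coef_shift s (i + j) M)
  = (-1) ^+ (N + 'C(M.+1, 2)) *
    \det (\matrix_(i < N, j < N) t (i + j + M + 2)%N).
Proof.
move=> s0 inv.
rewrite (@det_size_eq _ (fun i j => coef_shift s (i + j) M) _ (M.+1 + N)%N); last first.
  by rewrite addSn addnC.
exact: (@main_sq _ s t M N s0 inv).
Qed.
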